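(* Let $p$ be an odd prime with $p\equiv 5\pmod 8$. Then there exists a perfect $B[-1,3](p)$ set if and only if $6$ is a quartic residue modulo $p$, i.e. there is an integer $x$ with $x^4\equiv 6\pmod p$.
   Context: A set $B\subseteq\mathbb{Z}_p$ is a perfect $B[-1,3](p)$ set if every nonzero element of $\mathbb{Z}_p$ has a unique representation $ab \bmod p$ with $a\in\{-1,1,2,3\}$ and $b\in B$ (and $0$ has no such representation); equivalently $B\subseteq\mathbb{Z}_p^\ast$, $|B|=(p-1)/4$, and the sets $\{-b,b,2b,3b\}$, $b\in B$, partition $\mathbb{Z}_p^\ast=\mathbb{Z}_p\setminus\{0\}$. *)

(* Defs.v *)
(* Elements of Z_p are represented by 'I_p (residues 0..p-1). *)
From mathcomp Require Import all_boot.
Set Implicit Arguments. Unset Strict Implicit. Unset Printing Implicit Defensive.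

(* The multiplier set {-1, 1, 2, 3} as residues mod p, indexed by 'I_4:
   index 0 -> -1 (i.e. p - 1), 1 -> 1, 2 -> 2, 3 -> 3. *)
Definition mult_m13 (p : nat) (i : 'I_4) : nat :=
  match val i with
  | 0 => p - 1
  | k => k
  end.

Definition repr_m13 (p : nat) (i : 'I_4) (b : nat) : nat :=
  (mult_m13 p i * b) %% p.

Definition perfect_B_m13 (p : nat) (B : {set 'I_p}) : Prop :=
  (forall x : 'I_p, val x != 0 ->
     exists! ab : 'I_4 * 'I_p, (ab.2 \in B) /\ repr_m13 p ab.1 (val ab.2) = val x)
  /\ (forall (i : 'I_4) (b : 'I_p), b \in B -> repr_m13 p i (val b) != 0).

(* Main.v *)
Require Import Defs.
From mathcomp Require Import all_boot all_order all_algebra all_field.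
From mathcomp Require Import ring zify.
Import GRing.Theory.
Lemma repr_mod p i b : repr_m13 p i b %% p = repr_m13 p i b.
Proof. by rewrite /repr_m13 modn_mod. Qed.

Lemma big_perfect (p : nat) (R : Type) (idx : R) (op : Monoid.com_law idx)
  (B : {set 'I_p}) (G : nat -> R) : (0 < p)%N ->
  perfect_B_m13 B ->
  \big[op/idx]_(1 <= k < p) G k =
  \big[op/idx]_(i < 4) \big[op/idx]_(b in B) G (repr_m13 p i (val b)).
Proof.
move=> p0 [uq nz].
rewrite pair_big /=.
pose hh (j : 'I_4 * 'I_p) : 'I_p := Ordinal (ltn_pmod (repr_m13 p j.1 (val j.2)) p0).
rewrite (partition_big hh (fun x : 'I_p => val x != 0%N)) /=; last first.
  by move=> j /= hj; rewrite repr_mod; exact: (nz j.1 j.2 hj).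
have inner : forall x : 'I_p, val x != 0%N ->
  \big[op/idx]_(j <- index_enum (prod 'I_4 'I_p) | (j.2 \in B) && (hh j == x))
      G (repr_m13 p j.1 (val j.2)) = G (val x).
  move=> x hx; have [j0 [[hb hr] hu]] := uq x hx.
  rewrite (big_pred1 j0) ?hr //.
  move=> j /=; apply/idP/eqP.
    move=> /andP [hjb /eqP hjx]; apply: esym; apply: hu; split => //.
    by rewrite -hjx /= repr_mod.
  move=> ->; rewrite hb /=; apply/eqP; apply: val_inj => /=; rewrite repr_mod; exact: hr.
rewrite (eq_bigr _ inner).
rewrite -(big_mkord (fun k => k != 0%N) G).
rewrite [RHS]big_ltn_cond //= [RHS]big_nat_cond [LHS]big_nat_cond.
apply: eq_bigl => k; case: k => //.
Qed.
Section Fp.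
Variable p : nat.
Hypothesis pr : prime p.
Local Open Scope ring_scope.
Local Notation F := 'F_p.

Lemma p_gt1 : (1 < p)%N. Proof. exact: prime_gt1. Qed.

Lemma natF0 n : ((n%:R : F) == 0) = (p %| n)%N.
Proof.
by rewrite -(inj_eq val_inj) /= val_Fp_nat // /dvdn.
Qed.

Lemma eqFp a b : ((a%:R : F) = b%:R) <-> (a = b %[mod p])%N.
Proof.
split => [h|h].
  by have := congr1 val h; rewrite /= !val_Fp_nat.
by apply: val_inj; rewrite /= !val_Fp_nat // h.
Qed.

Lemma valF_lt (y : F) : (val y < p)%N.
Proof. by apply: leq_trans (ltn_ord y) _; rewrite Fp_cast. Qed.

Lemma natr_valF (y : F) : (val y)%:R = y.
Proof. exact: natr_Zp. Qed.

Lemma fermatF (y : F) : y != 0 -> y ^+ p.-1 = 1.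
Proof.
move=> y0; have := expf_card y; rewrite card_Fp //.
have e : y ^+ p = y * y ^+ p.-1 by rewrite -exprS prednK // prime_gt0.
rewrite e => h.
by apply: (mulfI y0); rewrite h mulr1.
Qed.

Lemma wilsonF : \prod_(1 <= k < p) (k%:R : F) = -1.
Proof.
have := Wilson p_gt1; rewrite pr => /esym h.
have e : (p.-1)`! = (\prod_(1 <= i < p) i)%N by rewrite fact_prod prednK // prime_gt0.
rewrite e in h.
have : (((\prod_(1 <= i < p) i)%N.+1)%:R : F) == 0 by rewrite natF0 h.
by rewrite -natr1 natr_prod addr_eq0 => /eqP.
Qed.


Lemma natr_compl a b : (a + b = p)%N -> (a%:R : F) = - b%:R.
Proof. by move=> e; apply/eqP; rewrite -subr_eq0 opprK -natrD e natF0 dvdnn. Qed.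

Lemma sqrtm1 : (p %% 4 = 1)%N -> exists i : F, i ^+ 2 = -1.
Proof.
move=> p4.
have p0 := prime_gt0 pr.
set h := (p.-1 %/ 2)%N.
have hp : p = (h + h).+1 by rewrite /h; lia.
have he : (h %% 2 = 0)%N by rewrite /h; lia.
exists (\prod_(1 <= k < h.+1) (k%:R : F)).
have := wilsonF.
rewrite (@big_cat_nat _ _ _ h.+1) /=; try lia.
have E2 : \prod_(h.+1 <= k < p) (k%:R : F) = \prod_(1 <= k < h.+1) (- k%:R).
  rewrite -{1}(add0n h.+1) big_addn big_add1 /=.
  rewrite (_ : (p - h.+1 = h)%N); last lia.
  rewrite big_nat_rev /=; apply: eq_big_nat => i /andP [_ hi].
  apply: natr_compl; lia.
rewrite E2.
have -> : \prod_(1 <= k < h.+1) (- (k%:R : F)) = \prod_(1 <= k < h.+1) ((-1) * k%:R).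
  by apply: eq_bigr => i _; rewrite mulN1r.
rewrite big_split /= prodr_const_nat subn1 /=.
have -> : (-1 : F) ^+ h = 1.
  by rewrite (divn_eq h 2) he addn0 mulnC exprM sqrrN !expr1n.
by rewrite mul1r expr2.
Qed.

Lemma p_big : (p %% 8 = 5)%N -> (5 <= p)%N.
Proof. move=> h; have := prime_gt1 pr; lia. Qed.

Lemma nat_nz n : (0 < n < p)%N -> (n%:R : F) != 0.
Proof. by move=> h; rewrite natF0; apply/negP => /dvdn_leq; lia. Qed.

Lemma negN1_odd m : odd m -> (-1 : F) ^+ m = -1.
Proof.
move=> om; rewrite (divn_eq m 2) modn2 om addn1 exprS mulnC exprM sqrrN !expr1n.
by rewrite mulr1.
Qed.

Lemma two_qnr : (p %% 8 = 5)%N -> (2 : F) ^+ (2 * (p.-1 %/ 4)) = -1.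
Proof.
move=> p8; have p5 := p_big p8; set m := (p.-1 %/ 4)%N.
have [i hi] := sqrtm1 (ltac:(lia)).
have two0 : (2 : F) != 0 by apply: nat_nz; lia.
have i1 : 1 + i != 0.
  apply/negP => /eqP e; have ei : i = -1 by rewrite -(addKr 1 i) e addr0.
  move: hi; rewrite ei sqrrN expr1n => /eqP; rewrite -subr_eq0 opprK.
  by rewrite (negbTE two0).
have := fermatF (1 + i) i1.
have -> : p.-1 = (2 * (2 * m))%N by rewrite /m; lia.
have e2 : (1 + i) ^+ 2 = 2 * i.
  have e : (1 + i) ^+ 2 = 1 + 2 * i + i ^+ 2 by ring.
  by rewrite e hi; ring.
rewrite exprM e2.
rewrite exprMn [i ^+ _]exprM hi negN1_odd; last by rewrite /m; apply/negP; lia.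
by move/(congr1 -%R); rewrite mulrN1 opprK => ->.
Qed.

Definition Aval (i : 'I_4) : F := (mult_m13 p i)%:R.

Lemma repr_F i b : ((repr_m13 p i b)%:R : F) = Aval i * b%:R.
Proof. by rewrite /repr_m13 Fp_nat_mod // natrM. Qed.

Lemma Aval0 : Aval ord0 = -1.
Proof. rewrite /Aval /mult_m13 /= (natr_compl (p-1) 1) //; have := prime_gt1 pr; lia. Qed.

Lemma prodA : \prod_(i < 4) Aval i = -6.
Proof.
rewrite !big_ord_recl big_ord0 /=.
have -> : Aval ord0 = -1 by exact: Aval0.
by rewrite /Aval /mult_m13 /= /bump /=; ring.
Qed.


Lemma alg_quartic (n : nat) (Y : F) : odd n -> (-6) ^+ n * Y ^+ 4 = -1 ->
  exists X : F, X ^+ 4 = 6.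
Proof.
move=> on h.
have r13 : (n %% 4 = 1 \/ n %% 4 = 3)%N by lia.
set t := (n %/ 4)%N.
set Z := (-6) ^+ t * Y.
have hZ : (-6) ^+ (n %% 4) * Z ^+ 4 = -1.
  by rewrite -h {2}(divn_eq n 4) exprD exprM /Z /t exprMn mulrCA mulrA.
clearbody Z; case: r13 => r; rewrite r in hZ.
  exists Z^-1; rewrite exprVn; apply: mulr1_eq.
  by rewrite -[RHS]opprK -hZ; ring.
exists (6 * Z).
have h216 : 216 * Z ^+ 4 = 1 by rewrite -[RHS]opprK -hZ; ring.
rewrite (_ : (6 * Z) ^+ 4 = 6 * (216 * Z ^+ 4)); last by ring.
by rewrite h216 mulr1.
Qed.

Lemma forward (B : {set 'I_p}) : (p %% 8 = 5)%N -> perfect_B_m13 B ->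
  exists X : F, X ^+ 4 = 6.
Proof.
move=> p8 hB; have p5 := p_big p8; have p0 := prime_gt0 pr.
have cnt := @big_perfect p nat 0%N addn B (fun _ => 1%N) p0 hB.
rewrite sum_nat_const_nat muln1 in cnt.
have c4 : (\sum_(i < 4) \sum_(b in B) (fun _ : nat => 1%N) (repr_m13 p i (val b)) = #|B| * 4)%N.
  transitivity (\sum_(i < 4) #|B|)%N; first by apply: eq_bigr => i _; rewrite sum1_card.
  by rewrite big_const_ord iter_addn_0.
rewrite c4 in cnt.
have h2 : (#|B| %% 2 = 1)%N.
  move: cnt p8; generalize #|B| => k; clear; lia.
have on : odd #|B| by move: h2; rewrite modn2; case: (odd _).
have hprod := @big_perfect p F 1 *%R B (fun k => k%:R) p0 hB.
rewrite wilsonF in hprod.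
have e : \prod_(i < 4) \prod_(b in B) ((repr_m13 p i (val b))%:R : F) =
   (-6) ^+ #|B| * (\prod_(b in B) ((val b)%:R : F)) ^+ 4.
  rewrite (eq_bigr (fun i => Aval i ^+ #|B| * \prod_(b in B) ((val b)%:R : F))); last first.
    move=> i _; rewrite (eq_bigr (fun b : 'I_p => Aval i * (val b)%:R)); last first.
      by move=> b _; rewrite repr_F.
    by rewrite big_split /= prodr_const.
  by rewrite big_split /= prodrXl prodA prodr_const card_ord.
rewrite e in hprod.
exact: (alg_quartic _ _ on (esym hprod)).
Qed.


Definition toI (y : F) : 'I_p := Ordinal (valF_lt y).

Lemma toIK (y : F) : ((val (toI y))%:R : F) = y.
Proof. exact: natr_valF. Qed.

Lemma eqI (a b : 'I_p) : ((val a)%:R : F) = (val b)%:R -> a = b.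
Proof.
move/eqFp; rewrite !modn_small ?ltn_ord // => e; exact: val_inj.
Qed.

Lemma backward (X : F) : (p %% 8 = 5)%N -> X ^+ 4 = 6 ->
  exists B : {set 'I_p}, perfect_B_m13 B.
Proof.
move=> p8 hX; have p5 := p_big p8; have p0 := prime_gt0 pr.
set m := (p.-1 %/ 4)%N.
have m0 : (0 < m)%N by rewrite /m; lia.
have mo : odd m.
  have h2 : (m %% 2 = 1)%N by rewrite /m; lia.
  by move: h2; rewrite modn2; case: (odd _).
have pm : p.-1 = (m * 4)%N by rewrite /m; lia.
set j : F := 2 ^+ m.
have hj2 : j ^+ 2 = -1 by rewrite /j -exprM mulnC two_qnr.
have two0 : (2 : F) != 0 by apply: nat_nz; lia.
have three0 : (3 : F) != 0 by apply: nat_nz; lia.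
have six0 : (6 : F) != 0.
  by rewrite (_ : (6 : F) = 2 * 3); [rewrite mulf_neq0 | ring].
have X0 : X != 0 by apply/eqP => e; move: hX; rewrite e expr0n /= => /eqP; rewrite eq_sym (negbTE six0).
have h6 : (6 : F) ^+ m = 1 by rewrite -hX -exprM mulnC -pm fermatF.
have jj : j * (- j) = 1 by rewrite mulrN -expr2 hj2 opprK.
have h3 : (3 : F) ^+ m = - j.
  have e23 : j * 3 ^+ m = 1 by rewrite /j -exprMn (_ : (2 : F) * 3 = 6) // ; ring.
  have : (3 : F) ^+ m * (j * - j) = - j by rewrite mulrA (mulrC _ j) e23 mul1r.
  by rewrite jj mulr1.
have j0 : j != 0 by apply/eqP => e; move: hj2; rewrite e expr0n /= => /eqP; rewrite eq_sym oppr_eq0 oner_eq0.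
have n11 : (-1 : F) != 1.
  apply/eqP => e; move: two0; rewrite (_ : (2 : F) = 1 - (-1)); last by ring.
  by rewrite e subrr eqxx.
have nj1 : j != 1 by apply/eqP => e; move: hj2; rewrite e expr1n => /esym/eqP; rewrite (negbTE n11).
have njm1 : j != -1 by apply/eqP => e; move: hj2; rewrite e sqrrN expr1n => /esym/eqP; rewrite (negbTE n11).
have njj : j != - j.
  apply/eqP => e; move: (mulf_neq0 two0 j0); rewrite (_ : 2 * j = j - - j); last by ring.
  by rewrite -e subrr eqxx.
have nmj1 : - j != 1 by rewrite eqr_oppLR.
have nmjm1 : - j != -1 by rewrite eqr_opp.
pose vl (i : 'I_4) : F := nth 0 [:: -1; 1; j; - j] i.
have vtab : forall i, Aval i ^+ m = vl i.
{ case=> [[|[|[|[|?]]]] hi] //.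
  all: try (by rewrite (_ : Aval _ = -1) ?negN1_odd //; exact: Aval0).
  all: rewrite /Aval /mult_m13 /=; try by rewrite expr1n.
  all: try by rewrite h3. }
have vinj : forall i k, vl i = vl k -> i = k.
{ move=> i k; case: i => [[|[|[|[|?]]]] hi] //; case: k => [[|[|[|[|?]]]] hk] //=.
  all: try (by move=> _; apply: val_inj).
  all: rewrite /vl /=; move=> e; exfalso; move: e; apply/eqP.
  all: first [done | rewrite eq_sym; done]. }
have vnz : forall i, vl i != 0.
  case=> [[|[|[|[|?]]]] hi] //=; rewrite ?oppr_eq0 ?oner_eq0 //.
have Anz : forall i, Aval i != 0.
  by move=> i; apply/eqP => e; move: (vnz i); rewrite -vtab e expr0n eqn0Ngt m0.
have cover : forall Z : F, Z ^+ 4 = 1 -> exists i, vl i = Z.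
  move=> Z hZ.
  have e : (Z - 1) * (Z + 1) * ((Z - j) * (Z + j)) = 0.
    rewrite (_ : (Z - j) * (Z + j) = Z ^+ 2 - j ^+ 2); last by ring.
    rewrite hj2 (_ : (Z - 1) * (Z + 1) * (Z ^+ 2 - -1) = Z ^+ 4 - 1); last by ring.
    by rewrite hZ subrr.
  move/eqP: e; rewrite !mulf_eq0 !subr_eq0 !addr_eq0.
  case/orP => [/orP [] /eqP e | /orP [] /eqP e].
  - by exists (Ordinal (isT : (1 < 4)%N)).
  - by exists (Ordinal (isT : (0 < 4)%N)).
  - by exists (Ordinal (isT : (2 < 4)%N)).
  - by exists (Ordinal (isT : (3 < 4)%N)).
exists [set b : 'I_p | ((val b)%:R : F) ^+ m == 1].
have repr_lt : forall i b, (repr_m13 p i b < p)%N by move=> i b; exact: ltn_pmod.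
split.
  move=> x hx.
  set Xx : F := (val x)%:R.
  have Xx0 : Xx != 0 by apply: nat_nz; rewrite lt0n hx ltn_ord.
  have hZ : (Xx ^+ m) ^+ 4 = 1 by rewrite -exprM -pm fermatF.
  have [i hi] := cover _ hZ.
  have [b hb] : exists b : 'I_p, ((val b)%:R : F) = Xx / Aval i.
    by exists (toI (Xx / Aval i)); rewrite toIK.
  exists (i, b); split.
    split => /=.
      by rewrite inE hb expr_div_n vtab hi divff // expf_neq0.
    apply/eqP; rewrite -(modn_small (repr_lt i _)) -(modn_small (ltn_ord x)).
    apply/eqP/eqFp; rewrite repr_F hb mulrC divfK //.
  case=> i' b' [/=]; rewrite inE => /eqP hb' hr.
  have e1 : Xx = Aval i' * (val b')%:R by rewrite -repr_F hr.
  have ei : i' = i.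
    by apply: vinj; rewrite -vtab hi e1 exprMn hb' mulr1.
  subst i'; congr (_, _); apply: eqI; rewrite hb e1 mulrAC divff // mul1r.
  done.
move=> i b; rewrite inE => /eqP hb; apply/eqP => e.
have := congr1 (fun n => (n%:R : F)) e; rewrite /= repr_F; apply/eqP.
rewrite mulf_neq0 //; apply/eqP => e0; move: hb; rewrite e0 expr0n.
by rewrite eqn0Ngt m0 /= => /eqP; rewrite eq_sym oner_eq0.
Qed.

End Fp.

Theorem theorem4p6 (p : nat) :
  prime p -> odd p -> p %% 8 = 5 ->
  ((exists B : {set 'I_p}, perfect_B_m13 B) <->
   (exists x : nat, x ^ 4 = 6 %[mod p])).
Proof.
move=> pr _ p8; split.
- case=> B hB; have [X hX] := @forward p pr B p8 hB.
  exists (val X); apply/(@eqFp p pr _ _).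
  by rewrite natrX natr_valF.
- case=> x hx.
  have hX : ((x%:R : 'F_p) ^+ 4 = 6)%R.
    by rewrite -natrX; apply/(@eqFp p pr _ _).
  exact: (@backward p pr _ p8 hX).
Qed.
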